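(* Let $T\in\mathcal{GT}_k(n)$, $k\ge1$, and $i\in\{1,\dots,n\}$. Then $f_i\,\omega(T)$ is defined if and only if $i=q_j(T)$ for some $1\le j\le k$.
   Context: Type $C$ setting: $C_n=\{1<\cdots<n<\overline n<\cdots<\overline1\}$ with crystal graph $1\xrightarrow{1}2\xrightarrow{2}\cdots\xrightarrow{n-1}n\xrightarrow{n}\overline n\xrightarrow{n-1}\cdots\xrightarrow{1}\overline1$; Kashiwara operators act on $C_n^*$ by the tensor product rule. A column is a strictly increasing word; $N_z(u)$ counts letters $x\le z$ or $x\ge\overline z$; admissible columns are nonempty columns with $N_z(u)\le z$ for all $z$. $\mathrm{ACol}(C_n)$ is the set of admissible columns plus $\epsilon$; $p$ erases $\epsilon$; $f_iw$ is defined for $w\in\mathrm{ACol}(C_n)^*$ iff $f_ip(w)$ is defined. Blocks: $\mathfrak{c}(m)=12\cdots m$; $\mathfrak{c}(a,b)=(a+1)\cdots(a+b)$; $\mathfrak{c}(\overline a,c)=\overline a\cdots\overline{a-c+1}$ (empty when $b=0$ resp. $c=0$). $C$-trees: vertices $i$ ($i\ge1$), $im$, $im^-$ ($i,m\ge1$); $i$ has level $i$, $im,im^-$ level $i+m$; strand $i$ ordered $i<i1<i1^-<i2<\cdots$. A labelling of rank $k$ is $s$ from vertices of level $\le k$ to $\mathbb N$; valuation $q(v)=s(i)+\sum_{im\le v}s(im)-\sum_{im^-\le v}s(im^-)$ for $v$ on strand $i$; $n$-labelling if $0\le q\le n$. $\rho(i)=\mathfrak{c}(s(i))$; $\rho(im)=\mathfrak{c}(q(v'),s(im))$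 with $v'$ the predecessor of $im$ on its strand; $\rho(im^-)=\mathfrak{c}(\overline{q(im)},s(im^-))$. $\omega_t=\rho(t)\rho((t-1)1)\cdots\rho(1(t-1))\rho(1(t-1)^-)\cdots\rho((t-1)1^-)$, or $\epsilon$ if empty. $\mathcal{GT}_k(n)$: $n$-labellings of rank $k$ with each $\omega_t$ equal to $\epsilon$ or an admissible column; $\omega(T)=\omega_1\cdots\omega_k$. $q_j(T)=q(j(k-j)^-)$ for $1\le j\le k-1$ and $q_k(T)=s(k)$. *)

(* Defs.v *)
From mathcomp Require Import all_boot all_algebra.
Set Implicit Arguments. Unset Strict Implicit. Unset Printing Implicit Defensive.
Import GRing.Theory Num.Theory.

(* Unb a = a, Bar a = \overline a ; the alphabet C_n consists of the letters
   with 1 <= a <= n. *)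
Inductive letter := Unb of nat | Bar of nat.

Definition letter_val (x : letter) : nat := match x with Unb a => a | Bar a => a end.
Definition inCn (n : nat) (x : letter) : bool := (1 <= letter_val x <= n)%N.

(* position in the total order 1 < ... < n < \bar n < ... < \bar 1 *)
Definition lrank (n : nat) (x : letter) : nat :=
  match x with Unb a => a | Bar a => (2 * n).+1 - a end.
Definition lt_letter (n : nat) (x y : letter) : bool := (lrank n x < lrank n y)%N.

Definition f_letter (n i : nat) (x : letter) : option letter :=
  match x with
  | Unb a => if (i < n)%N && (a == i) then Some (Unb i.+1)
             else if (i == n) && (a == n) then Some (Bar n) else None
  | Bar a => if (i < n)%N && (a == i.+1) then Some (Bar i) else None
  end.
Definition e_letter (n i : nat) (x : letter) : option letter :=
  match x with
  | Unb a => if (i < n)%N && (a == i.+1) then Some (Unb i) else None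
  | Bar a => if (i < n)%N && (a == i) then Some (Bar i.+1)
             else if (i == n) && (a == n) then Some (Unb n) else None
  end.

(* Tensor product (signature) rule on words x_1 ... x_l = x_1 (x) ... (x) x_l:
   letters with f_i defined give '+', letters with e_i defined give '-';
   adjacent pairs '+-' are cancelled recursively, and f_i acts on the
   leftmost unmatched '+' (undefined if there is none).
   fword_aux returns (f_i w, number of unmatched '-' in w). *)
Fixpoint fword_aux (n i : nat) (w : seq letter) : option (seq letter) * nat :=
  match w with
  | [::] => (None, 0%N)
  | x :: w' =>
    let (r, m) := fword_aux n i w' in
    let r' := omap (cons x) r in
    match f_letter n i x with
    | Some y => if (0 < m)%N then (r', m.-1) else (Some (y :: w'), 0%N)
    | None => if e_letter n i x is Some _ then (r', m.+1) else (r', m)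
    end
  end.
Definition fword (n i : nat) (w : seq letter) : option (seq letter) :=
  (fword_aux n i w).1.

Definition is_column (n : nat) (u : seq letter) : bool :=
  all (inCn n) u && sorted (lt_letter n) u.
(* N_z(u): number of letters x <= z or x >= \bar z *)
Definition Nz (z : nat) (u : seq letter) : nat :=
  count (fun x => (letter_val x <= z)%N) u.
Definition admissible (n : nat) (u : seq letter) : Prop :=
  u <> [::] /\ is_column n u /\ forall z : nat, (Nz z u <= z)%N.

Definition cblock (m : nat) : seq letter := map Unb (iota 1 m).
Definition cblockP (a b : nat) : seq letter := map Unb (iota a.+1 b).
Definition cblockM (a c : nat) : seq letter :=
  map (fun j => Bar (a - j)) (iota 0 c).

(* VR i = vertex i ; VP i m = vertex im ; VM i m = vertex im^- *)
Inductive vtx := VR of nat | VP of nat & nat | VM of nat & nat.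

Definition level (v : vtx) : nat :=
  match v with VR i => i | VP i m => i + m | VM i m => i + m end.
Definition valid_vtx (v : vtx) : bool :=
  match v with VR i => (1 <= i)%N | VP i m | VM i m => (1 <= i)%N && (1 <= m)%N end.

(* A labelling is a map s : vtx -> nat; only its values on vertices of
   level <= k are relevant for a labelling of rank k (all notions below only
   read those values). *)
Definition labelling := vtx -> nat.

(* valuation q(v): strand i is ordered i < i1 < i1^- < i2 < i2^- < ... *)
Definition qv (s : labelling) (v : vtx) : int :=
  match v with
  | VR i => (s (VR i))%:Z
  | VP i m => (s (VR i))%:Z + (\sum_(1 <= l < m.+1) s (VP i l))%:Z
                - (\sum_(1 <= l < m) s (VM i l))%:Z
  | VM i m => (s (VR i))%:Z + (\sum_(1 <= l < m.+1) s (VP i l))%:Z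
                - (\sum_(1 <= l < m.+1) s (VM i l))%:Z
  end.

Definition nlabelling (n k : nat) (s : labelling) : Prop :=
  forall v, valid_vtx v -> (level v <= k)%N -> (0 <= qv s v)%R /\ (qv s v <= Posz n)%R.

(* nonnegative integers to nat (used only where q >= 0) *)
Definition nat_of_int (z : int) : nat := match z with Posz m => m | Negz _ => 0%N end.

Definition rho (s : labelling) (v : vtx) : seq letter :=
  match v with
  | VR i => cblock (s (VR i))
  | VP i m => let v' := if m == 1%N then VR i else VM i m.-1 in
              cblockP (nat_of_int (qv s v')) (s (VP i m))
  | VM i m => cblockM (nat_of_int (qv s (VP i m))) (s (VM i m))
  end.

(* omega_t = rho(t) rho((t-1)1) ... rho(1(t-1)) rho(1(t-1)^-) ... rho((t-1)1^-),
   the empty word representing epsilon *)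
Definition omega_t (s : labelling) (t : nat) : seq letter :=
  rho s (VR t)
  ++ flatten [seq rho s (VP i (t - i)) | i <- rev (iota 1 t.-1)]
  ++ flatten [seq rho s (VM i (t - i)) | i <- iota 1 t.-1].

Definition GT (n k : nat) (s : labelling) : Prop :=
  nlabelling n k s /\
  forall t, (1 <= t <= k)%N -> omega_t s t = [::] \/ admissible n (omega_t s t).

Definition omega (k : nat) (s : labelling) : seq (seq letter) :=
  [seq omega_t s t | t <- iota 1 k].

(* p : ACol(C_n)^* -> C_n^*, erasing epsilon (= empty columns) *)
Definition perase (w : seq (seq letter)) : seq letter := flatten w.

(* f_i on ACol(C_n)^* is defined iff f_i p(w) is defined *)
Definition f_defined (n i : nat) (w : seq (seq letter)) : bool :=
  isSome (fword n i (perase w)).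

Definition qj (k : nat) (s : labelling) (j : nat) : int :=
  if (j < k)%N then qv s (VM j (k - j)) else Posz (s (VR k)).

(* Main.v *)
Require Import Defs.
From mathcomp Require Import all_boot all_algebra.
From mathcomp Require Import zify ring.
Set Implicit Arguments. Unset Strict Implicit. Unset Printing Implicit Defensive.

Definition pl n i x := isSome (f_letter n i x).
Definition mi n i x := isSome (e_letter n i x).

Fixpoint sg n i (w : seq letter) : nat * nat :=
  match w with
  | [::] => (0, 0)
  | x :: w' => let r := sg n i w' in
     if pl n i x then (if 0 < r.1 then (r.1.-1, r.2) else (r.1, r.2.+1))
     else if mi n i x then (r.1.+1, r.2) else r
  end.

Lemma fword_sg n i w : (fword_aux n i w).2 = (sg n i w).1 /\
   isSome (fword_aux n i w).1 = (0 < (sg n i w).2).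
Proof.
elim: w => [|x w [IH1 IH2]] //=.
rewrite /pl /mi; case: (fword_aux n i w) IH1 IH2 => r m /= -> IH2.
case: (f_letter n i x) => [y|] /=.
  case: ifP => h /=.
    by split => //; rewrite -IH2; case: r {IH2}.
  by split => //; move/negbT: h; rewrite -leqNgt leqn0 => /eqP.
by case: (e_letter n i x) => [z|] /=; split => //; rewrite -IH2; case: r {IH2}.
Qed.

Lemma sg_cat n i u v : sg n i (u ++ v) =
  ((sg n i u).1 + ((sg n i v).1 - (sg n i u).2),
   (sg n i v).2 + ((sg n i u).2 - (sg n i v).1)).
Proof.
elim: u => [|x u IH] /=; first by rewrite subn0 sub0n addn0; case: (sg n i v).
rewrite IH; case: (sg n i u) => e1 p1; case: (sg n i v) => e2 p2 /=.
case: ifP => _.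
  case: (ltnP 0 (e1 + (e2 - p1))) => h1; case: (ltnP 0 e1) => h2 /=;
  congr pair; lia.
case: ifP => _ /=; congr pair; lia.
Qed.

Lemma sg_cnt n i w : (sg n i w).2 + count (mi n i) w = (sg n i w).1 + count (pl n i) w.
Proof.
elim: w => [|x w IH] //=.
case: (sg n i w) IH => e p /= IH.
case: ifP => hp.
  have hm : mi n i x = false.
    move: hp; rewrite /pl /mi; case: x => a /=; repeat case: ifP => //; lia.
  rewrite hm; case: (ltnP 0 e) => h /=; lia.
case: ifP => hm /=; rewrite ?hp ?hm /=; lia.
Qed.

Lemma sg_eps_le n i u v : (sg n i (u ++ v)).1 <= (sg n i u).1 + (sg n i v).1.
Proof. rewrite sg_cat /=; lia. Qed.

Lemma epsP n i a p : 1 <= i <= n -> (sg n i (cblockP a p)).1 <= (a == i).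
Proof.
move=> /andP[h1 h2]; elim: p a => [|p IH] a //=.
move: (IH a.+1); rewrite /cblockP /=.
case: (sg n i _) => e q /=; rewrite /pl /mi /=.
repeat case: ifP => /=; lia.
Qed.

Lemma cblockM_S b c : cblockM b c.+1 = Bar b :: cblockM b.-1 c.
Proof.
rewrite /cblockM /= subn0; congr cons.
rewrite -[1]/(1 + 0) iotaDl -map_comp; apply: eq_map => j /=; congr Bar; lia.
Qed.

Lemma epsM n i b c : 1 <= i <= n -> b <= n -> (sg n i (cblockM b c)).1 <= (b == i).
Proof.
move=> /andP[h1 h2]; elim: c b => [|c IH] b hb; first by [].
rewrite cblockM_S /=; move: (IH b.-1 (leq_trans (leq_pred b) hb)).
case: (sg n i _) => e q /=; rewrite /pl /mi /=.
repeat case: ifP => /=; lia.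
Qed.

Lemma cntP n i a p : 1 <= i <= n -> a + p <= n ->
  count (pl n i) (cblockP a p) + (a == i) = count (mi n i) (cblockP a p) + (a + p == i).
Proof.
move=> /andP[h1 h2]; elim: p a => [|p IH] a /=; first by rewrite addn0.
move=> hb; move: (IH a.+1 ltac:(lia)); rewrite /cblockP /= /pl /mi /=.
repeat case: ifP => /=; lia.
Qed.

Lemma cntM n i b c : 1 <= i <= n -> c <= b <= n ->
  count (pl n i) (cblockM b c) + (b == i) = count (mi n i) (cblockM b c) + (b - c == i).
Proof.
move=> /andP[h1 h2]; elim: c b => [|c IH] b; first by rewrite /= subn0.
move=> hb; rewrite cblockM_S /=; move: (IH b.-1 ltac:(lia)); rewrite /pl /mi /=.
repeat case: ifP => /=; lia.
Qed.

Lemma eps_flat n i (f : nat -> seq letter) (g : nat -> nat) J :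
  (forall j, j \in J -> (sg n i (f j)).1 <= g j) ->
  (sg n i (flatten (map f J))).1 <= \sum_(j <- J) g j.
Proof.
elim: J => [|j J IH] H /=; first by rewrite big_nil.
rewrite big_cons; apply: leq_trans (sg_eps_le _ _ _ _) _; apply: leq_add.
  by apply: H; rewrite mem_head.
by apply: IH => x hx; apply: H; rewrite in_cons hx orbT.
Qed.

Lemma cnt_flat n i (f : nat -> seq letter) (g h : nat -> nat) J :
  (forall j, j \in J -> count (pl n i) (f j) + g j = count (mi n i) (f j) + h j) ->
  count (pl n i) (flatten (map f J)) + \sum_(j <- J) g j
  = count (mi n i) (flatten (map f J)) + \sum_(j <- J) h j.
Proof.
elim: J => [|j J IH] H /=; first by rewrite !big_nil.
rewrite !big_cons !count_cat.
have H1 := H j (mem_head _ _).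
have H2 := IH (fun x hx => H x ltac:(by rewrite in_cons hx orbT)).
by rewrite [LHS]addnACA [RHS]addnACA H1 H2.
Qed.

Lemma sum_rev (F : nat -> nat) J : \sum_(j <- rev J) F j = \sum_(j <- J) F j.
Proof. by rewrite big_rev. Qed.

Lemma column n i st (a p m : nat -> nat) (J : seq nat) : 1 <= i <= n -> st <= n ->
  (forall j, j \in J -> a j + p j <= n /\ m j <= a j + p j) ->
  let w := cblock st ++ flatten [seq cblockP (a j) (p j) | j <- rev J]
             ++ flatten [seq cblockM (a j + p j) (m j) | j <- J] in
  (sg n i w).1 <= \sum_(j <- J) (a j == i) /\
  (sg n i w).2 + \sum_(j <- J) (a j == i)
    = (sg n i w).1 + (st == i) + \sum_(j <- J) (a j + p j - m j == i).
Proof.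
move=> hi hst hJ w; rewrite {}/w catA.
set U := flatten [seq cblockP _ _ | j <- rev J].
set B := flatten [seq cblockM _ _ | j <- J].
set u := cblock st ++ U.
have Eu : (sg n i u).1 <= \sum_(j <- J) (a j == i).
  apply: leq_trans (sg_eps_le _ _ _ _) _.
  have e0 : (sg n i (cblockP 0 st)).1 <= (0 == i) := epsP 0 st hi.
  have eU : (sg n i U).1 <= \sum_(j <- rev J) (a j == i).
    by apply: eps_flat => j _; apply: epsP.
  rewrite sum_rev in eU. change (cblock st) with (cblockP 0 st).
  move: hi e0 eU => /andP[hi1 _]; rewrite (ltn_eqF hi1).
  move: (\sum_(j <- J) _) => S; lia.
have EB : (sg n i B).1 <= \sum_(j <- J) (a j + p j == i).
  by apply: eps_flat => j hj; apply: epsM => //; case: (hJ j hj).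
have Cu : count (pl n i) u + \sum_(j <- J) (a j == i)
   = count (mi n i) u + (st == i) + \sum_(j <- J) (a j + p j == i).
  have c0 := cntP (a := 0) (p := st) hi hst.
  have cU : count (pl n i) U + \sum_(j <- rev J) (a j == i)
      = count (mi n i) U + \sum_(j <- rev J) (a j + p j == i).
    apply: cnt_flat => j; rewrite mem_rev => hj; apply: cntP => //; by case: (hJ j hj).
  rewrite !sum_rev in cU; rewrite /u !count_cat.
  change (cblock st) with (cblockP 0 st).
  move: hi c0 => /andP[hi1 _]; rewrite (ltn_eqF hi1).
  rewrite add0n; move: cU; move: (\sum_(j <- J) (a j == i)) (\sum_(j <- J) (a j + p j == i)) => S1 S2.
  lia.
have CB : count (pl n i) B + \sum_(j <- J) (a j + p j == i)
   = count (mi n i) B + \sum_(j <- J) (a j + p j - m j == i).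
  apply: cnt_flat => j hj; apply: cntM => //; case: (hJ j hj) => ? ?; lia.
clearbody u U B.
have Su := sg_cnt n i u. have Sw := sg_cnt n i (u ++ B).
move: Sw; rewrite !count_cat !sg_cat /= => Sw.
move: Eu EB Cu CB Su Sw.
move: (\sum_(j <- J) (a j == i)) (\sum_(j <- J) (a j + p j == i)) (\sum_(j <- J) (a j + p j - m j == i)) => S1 S2 S3.
move=> H1 H2 H3 H4 H5 H6; split; lia.
Qed.

Import GRing.Theory Num.Theory.

Lemma qv_VP (s : labelling) j m : 0 < m ->
  qv s (VP j m) = (qv s (if m == 1%N then VR j else VM j m.-1) + (s (VP j m))%:Z)%R.
Proof.
case: m => [|m] // _; rewrite /qv.
case: m => [|m].
  by rewrite /= big_nat1 big_geq // subr0.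
rewrite /= big_nat_recr //= PoszD; ring.
Qed.

Lemma qv_VM (s : labelling) j m : 0 < m ->
  qv s (VM j m) = (qv s (VP j m) - (s (VM j m))%:Z)%R.
Proof.
case: m => [|m] // _; rewrite /qv.
rewrite /= (@big_nat_recr _ _ _ m.+1 1 (fun l => s (VM j l))) //= PoszD; ring.
Qed.

Lemma qj_prev (s : labelling) t j : 1 <= j <= t ->
  qv s (if t.+1 - j == 1 then VR j else VM j (t.+1 - j).-1) = qj t s j.
Proof.
move=> /andP[h1 h2]; rewrite /qj; case: ltnP => h.
  have -> : (t.+1 - j == 1) = false by apply/negbTE; lia.
  by have -> : (t.+1 - j).-1 = t - j by lia.
have ej : j = t by lia.
by subst j; rewrite subSnn.
Qed.

Lemma nat_of_intK (z : int) : (0 <= z)%R -> Posz (nat_of_int z) = z.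
Proof. by case: z. Qed.

Lemma sum_pos (P : pred nat) J : (0 < \sum_(j <- J) (P j : nat)) = has P J.
Proof.
elim: J => [|j J IH]; first by rewrite big_nil.
by rewrite big_cons /= -IH; case: (P j).
Qed.

Lemma nl_bounds n k (s : labelling) v : nlabelling n k s -> valid_vtx v -> level v <= k ->
  Posz (nat_of_int (qv s v)) = qv s v /\ nat_of_int (qv s v) <= n.
Proof.
move=> H hv hl; have [h1 h2] := H v hv hl.
rewrite nat_of_intK //; split => //; move: h2; rewrite -(nat_of_intK h1) lez_nat //.
Qed.

Lemma iotaS1 t : iota 1 t.+1 = iota 1 t ++ [:: t.+1].
Proof. rewrite -[in LHS](addn1 t) iotaD /=; congr (_ ++ [:: _]); lia. Qed.

Definition W (s : labelling) t := flatten (map (omega_t s) (iota 1 t)).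

Lemma invariant n k (s : labelling) i t : GT n k s -> 1 <= i <= n -> t <= k ->
  (sg n i (W s t)).1 = 0 /\
  (sg n i (W s t)).2 = \sum_(j <- iota 1 t) (qj t s j == Posz i : nat).
Proof.
move=> [NL _] hi; elim: t => [|t IH] ht; first by rewrite big_nil.
have [IH1 IH2] := IH (ltnW ht).
pose a j := nat_of_int (qj t s j).
pose p j := s (VP j (t.+1 - j)).
pose m j := s (VM j (t.+1 - j)).
pose st := s (VR t.+1).
have Ha : forall j, j \in iota 1 t -> qj t s j = Posz (a j) /\ a j <= n.
  move=> j; rewrite mem_iota => hj; rewrite /a /qj.
  case: ltnP => hjt.
    have [e b] := nl_bounds (v := VM j (t - j)) NL ltac:(rewrite /=; lia) ltac:(rewrite /=; lia).
    by rewrite e.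
  have [e b] := nl_bounds (v := VR t) NL ltac:(rewrite /=; lia) ltac:(rewrite /=; lia).
  by move: e b => /= e b; split.
have Hb : forall j, j \in iota 1 t -> qv s (VP j (t.+1 - j)) = Posz (a j + p j) /\ a j + p j <= n.
  move=> j hj; have [e1 _] := Ha j hj; move: hj; rewrite mem_iota => hj.
  have e2 : qv s (VP j (t.+1 - j)) = Posz (a j + p j).
    rewrite qv_VP; last lia. rewrite qj_prev; last lia. by rewrite e1 PoszD.
  have [e b] := nl_bounds (v := VP j (t.+1 - j)) NL ltac:(rewrite /=; lia) ltac:(rewrite /=; lia).
  by split => //; move: b; rewrite e2.
have Hc : forall j, j \in iota 1 t -> qv s (VM j (t.+1 - j)) = Posz (a j + p j - m j) /\ m j <= a j + p j.
  move=> j hj; have [e1 _] := Hb j hj; move: hj; rewrite mem_iota => hj.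
  have [e b] := nl_bounds (v := VM j (t.+1 - j)) NL ltac:(rewrite /=; lia) ltac:(rewrite /=; lia).
  have e2 : qv s (VM j (t.+1 - j)) = (Posz (a j + p j) - Posz (m j))%R.
    by rewrite qv_VM ?subn_gt0 ?e1 //; lia.
  have hm : m j <= a j + p j.
    by rewrite -lez_nat -subr_ge0 -e2 -e.
  by rewrite e2 -subzn.
have Hst : st <= n.
  have [e b] := nl_bounds (v := VR t.+1) NL ltac:(rewrite /=; lia) ltac:(rewrite /=; lia).
  by move: b.
have Eom : omega_t s t.+1 = cblock st ++ flatten [seq cblockP (a j) (p j) | j <- rev (iota 1 t)]
             ++ flatten [seq cblockM (a j + p j) (m j) | j <- iota 1 t].
  rewrite /omega_t; congr (_ ++ (flatten _ ++ flatten _)).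
    apply/eq_in_map => j; rewrite mem_rev => hj /=.
    have [e1 _] := Ha j hj; move: hj; rewrite mem_iota => hj.
    rewrite /p qj_prev ?e1 //; lia.
  apply/eq_in_map => j hj; have [e1 _] := Hb j hj.
  have -> : a j + p j = nat_of_int (qv s (VP j (t.+1 - j))) by rewrite e1.
  by [].
have [CA CB] := @column n i st a p m (iota 1 t) hi Hst
   ltac:(move=> j hj; have [_ h1] := Hb j hj; have [_ h2] := Hc j hj; by split).
rewrite -Eom in CA CB.
have eA : \sum_(j <- iota 1 t) (qj t s j == Posz i : nat) = \sum_(j <- iota 1 t) (a j == i).
  by apply: eq_big_seq => j hj; have [-> _] := Ha j hj.
have eC : \sum_(j <- iota 1 t.+1) (qj t.+1 s j == Posz i : nat)
    = \sum_(j <- iota 1 t) (a j + p j - m j == i) + (st == i).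
  rewrite iotaS1 big_cat /= big_seq1 /qj ltnn; congr (_ + _).
  apply: eq_big_seq => j hj; have [e _] := Hc j hj.
  move: hj; rewrite mem_iota => hj.
  by rewrite (_ : j < t.+1 = true) ?e //; lia.
rewrite eC; rewrite eA in IH2.
have -> : W s t.+1 = W s t ++ omega_t s t.+1.
  by rewrite /W iotaS1 map_cat flatten_cat /= cats0.
rewrite sg_cat /= IH1 IH2.
move: CA CB IH2; move: (\sum_(j <- iota 1 t) (a j == i)) (\sum_(j <- iota 1 t) (a j + p j - m j == i)) => S1 S2.
move=> *; split; lia.
Qed.

Theorem corollary5p6 (n k : nat) (s : labelling) (i : nat) :
  (1 <= k)%N -> GT n k s -> (1 <= i <= n)%N ->
  (f_defined n i (omega k s) <->
   exists2 j : nat, (1 <= j <= k)%N & Posz i = qj k s j).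
Proof.
move=> hk G hi.
have [_ I2] := invariant G hi (leqnn k).
have -> : f_defined n i (omega k s) = (0 < (sg n i (W s k)).2).
  by rewrite /f_defined /fword /perase; have [_ ->] := fword_sg n i (W s k).
rewrite I2 (sum_pos (fun j => qj k s j == Posz i)).
split.
  move/hasP => [j hj /eqP e]; exists j => //; move: hj; rewrite mem_iota; lia.
move=> [j hj e]; apply/hasP; exists j; first by rewrite mem_iota; lia.
by rewrite e.
Qed.
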